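(* Let $m\in\{2,3,\dots\}\cup\{\infty\}$ and let $T_n$ be uniformly distributed on $\mathsf{T}^{(m)}_n$. Given $T_n$, let $v^*$ be a uniformly chosen vertex of $T_n$ and $T^{( * )}_n$ the subtree of $T_n$ rooted at $v^*$ (consisting of $v^*$ and its descendants). Then for every $1\leq k\leq n$, conditionally on $\#T^{( * )}_n=k$, $T^{( * )}_n$ is uniformly distributed on $\mathsf{T}^{(m)}_k$.
   Context: $\mathsf{T}^{(m)}_n$ is the set of rooted unordered trees with $n$ vertices in which every vertex has at most $m$ children; $\#t$ is the number of vertices of $t$. *)

(* Defs.v *)
From HB Require Import structures.
From mathcomp Require Import all_boot all_order all_algebra.
Set Implicit Arguments. Unset Strict Implicit. Unset Printing Implicit Defensive.
Import Order.TTheory GRing.Theory Num.Theory.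

(* Plane (ordered) rooted trees; an unordered rooted tree is represented by
   its unique canonical representative (children sorted, recursively). *)
Inductive tree := Node of seq tree.

Fixpoint enc (t : tree) : GenTree.tree unit :=
  let: Node l := t in GenTree.Node 0 (map enc l).
Fixpoint dec (g : GenTree.tree unit) : tree :=
  match g with GenTree.Leaf _ => Node [::] | GenTree.Node _ l => Node (map dec l) end.
Fixpoint encK t : dec (enc t) = t :=
  match t with Node l => f_equal Node
    ((fix aux l : map dec (map enc l) = l :=
        match l with [::] => erefl | a :: l' => f_equal2 cons (encK a) (aux l') end) l)
  end.
HB.instance Definition _ := Countable.copy tree (can_type encK).

Fixpoint nverts (t : tree) : nat := let: Node l := t in (sumn (map nverts l)).+1.

(* m = None encodes m = infinity *)
Definition le_bound (m : option nat) (d : nat) : bool :=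
  if m is Some m' then d <= m' else true.

Fixpoint deg_ok (m : option nat) (t : tree) : bool :=
  let: Node l := t in le_bound m (size l) && all (deg_ok m) l.

Fixpoint canonical (t : tree) : bool :=
  let: Node l := t in sorted (fun a b => pickle a <= pickle b) l && all canonical l.

Definition inT (m : option nat) (n : nat) (t : tree) : bool :=
  [&& canonical t, deg_ok m t & nverts t == n].

(* the fringe subtrees of t, one per vertex (preorder) *)
Fixpoint fringes (t : tree) : seq tree :=
  let: Node l := t in t :: flatten (map fringes l).

Definition enumerates (E : seq tree) (P : pred tree) : Prop :=
  uniq E /\ forall t, (t \in E) = P t.

Local Open Scope ring_scope.
(* P(T* in A) where T uniform on the list E and v* uniform among vertices of T *)
Definition prob_sub (E : seq tree) (A : pred tree) : rat :=
  \sum_(t <- E) (1 / (size E)%:R) * ((count A (fringes t))%:R / (nverts t)%:R).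

(* Main.v *)
Require Import Defs.
From mathcomp Require Import all_boot all_order all_algebra zify ring.
Set Implicit Arguments. Unset Strict Implicit.

Definition le_t (a b : tree) := pickle a <= pickle b.
Fixpoint phi (s s' : tree) (t : tree) : tree := let: Node l := t in
  if Node l == s then s' else if Node l == s' then s else Node (sort le_t (map (phi s s') l)).

Lemma le_t_total : total le_t. Proof. by move=> a b; rewrite /le_t leq_total. Qed.
Lemma le_t_trans : transitive le_t. Proof. by move=> a b c; apply: leq_trans. Qed.
Lemma le_t_anti : antisymmetric le_t.
Proof. by move=> a b /anti_leq; exact: (pcan_inj pickleK). Qed.

Lemma sumn_ge (l : seq tree) c : c \in l -> nverts c <= sumn (map nverts l).
Proof.
elim: l => [|a l IH] //=; rewrite inE => /orP[/eqP->|/IH h]; first exact: leq_addr.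
by rewrite (leq_trans h) // leq_addl.
Qed.

Lemma nverts_child l c : c \in l -> nverts c < nverts (Node l).
Proof. by move=> h; rewrite /= ltnS sumn_ge. Qed.

Lemma tree_size_ind (P : tree -> Prop) :
  (forall l : seq tree, (forall c, c \in l -> P c) -> P (Node l)) -> forall t, P t.
Proof.
move=> H t; move: {2}(nverts t) (leqnn (nverts t)) => N; elim: N t => [|N IH] [l] hl.
  by [].
apply H => c hc; apply IH; have h := nverts_child hc; rewrite -ltnS; apply: leq_trans h _; exact: hl.
Qed.

Lemma fringes_nverts t f : f \in fringes t -> nverts f <= nverts t.
Proof.
elim/tree_size_ind: t => l IH /=; rewrite inE => /orP[/eqP->//|].
move/flattenP=> [fs /mapP[c hc ->] hf].
exact: leq_trans (IH c hc hf) (ltnW (nverts_child hc)).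
Qed.

Lemma fringes_self t : t \in fringes t.
Proof. by case: t => l; rewrite /= inE eqxx. Qed.

Lemma fringes_canon t f : f \in fringes t -> canonical t -> canonical f.
Proof.
elim/tree_size_ind: t => l IH /=; rewrite inE => /orP[/eqP->//|].
move/flattenP=> [fs /mapP[c hc ->] hf] /andP[_ /allP ha].
exact: IH c hc hf (ha c hc).
Qed.

Lemma fringes_deg m t f : f \in fringes t -> deg_ok m t -> deg_ok m f.
Proof.
elim/tree_size_ind: t => l IH /=; rewrite inE => /orP[/eqP->//|].
move/flattenP=> [fs /mapP[c hc ->] hf] /andP[_ /allP ha].
exact: IH c hc hf (ha c hc).
Qed.

Lemma cnt0 u t : nverts t < nverts u -> count (pred1 u) (fringes t) = 0.
Proof.
move=> h; apply/eqP; rewrite -leqn0 leqNgt -has_count; apply/hasPn => f hf /=.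
apply/negP => /eqP e; have := fringes_nverts hf; by rewrite e leqNgt h.
Qed.

Lemma count_node a l : count a (fringes (Node l)) = a (Node l) + sumn (map (fun c => count a (fringes c)) l).
Proof. by rewrite /= count_flatten -map_comp. Qed.

Lemma sumn_sort (f : tree -> nat) l : sumn (map f (sort le_t l)) = sumn (map f l).
Proof. by apply: perm_sumn; apply: perm_map; rewrite perm_sort. Qed.

Lemma cnt_same u v : nverts v <= nverts u -> count (pred1 u) (fringes v) = (v == u).
Proof.
case: v => lv h; rewrite count_node /=.
suff -> : sumn (map (fun c => count (pred1 u) (fringes c)) lv) = 0 by rewrite addn0.
elim: lv h => [|a lv IHl] //= h.
rewrite cnt0 ?add0n; last first.
  by apply: leq_trans h; rewrite ltnS /= leq_addr.
apply: IHl; apply: leq_trans h; by rewrite /= ltnS leq_addl.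
Qed.

Section Phi.
Variables (s s' : tree).
Hypotheses (cs : canonical s) (cs' : canonical s') (ns : nverts s' = nverts s).

Lemma phiE l : phi s s' (Node l) = if Node l == s then s' else if Node l == s' then s
  else Node (sort le_t (map (phi s s') l)).
Proof. by []. Qed.

Lemma nverts_phi t : nverts (phi s s' t) = nverts t.
Proof.
elim/tree_size_ind: t => l IH; rewrite phiE.
case: ifP => [/eqP->//|_]; case: ifP => [/eqP->//|_] /=.
rewrite sumn_sort -map_comp; congr (sumn _).+1; apply/eq_in_map => c hc /=; exact: IH.
Qed.

Lemma phi_id t : canonical t -> nverts t < nverts s -> phi s s' t = t.
Proof.
elim/tree_size_ind: t => l IH /andP[so /allP ca] hn /=.
have -> : (Node l == s) = false by apply/negP => /eqP e; move: hn; rewrite e ltnn.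
have -> : (Node l == s') = false by apply/negP => /eqP e; move: hn; rewrite e ns ltnn.
have -> : map (phi s s') l = l.
  rewrite -{2}(map_id l); apply/eq_in_map => c hc; apply: IH => //; first exact: ca.
  exact: ltn_trans (nverts_child hc) hn.
by rewrite sorted_sort //; apply: le_t_trans.
Qed.

Lemma phi_ne l : canonical (Node l) -> Node l != s -> Node l != s' ->
  Node (sort le_t (map (phi s s') l)) != s /\ Node (sort le_t (map (phi s s') l)) != s'.
Proof.
move=> ct h1 h2.
have Hphi : phi s s' (Node l) = Node (sort le_t (map (phi s s') l)) by rewrite /= (negbTE h1) (negbTE h2).
case: (eqVneq (nverts (Node l)) (nverts s)) => hn.
  suff -> : Node (sort le_t (map (phi s s') l)) = Node l by [].
  move: ct => /andP[so /allP ca].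
  have -> : map (phi s s') l = l.
    rewrite -{2}(map_id l); apply/eq_in_map => c hc; apply: phi_id; first exact: ca.
    by rewrite -hn nverts_child.
  by rewrite sorted_sort //; apply: le_t_trans.
have := nverts_phi (Node l); rewrite Hphi => e.
by split; apply/eqP => e2; move: hn; rewrite -e e2 ?ns eqxx.
Qed.

Lemma canon_phi t : canonical t -> canonical (phi s s' t).
Proof.
elim/tree_size_ind: t => l IH /= /andP[so /allP ca].
case: ifP => _ //; case: ifP => _ //=.
rewrite sort_sorted ?all_sort; last exact: le_t_total.
by apply/allP => _ /mapP[c hc ->]; apply: IH => //; exact: ca.
Qed.

Lemma deg_phi m t : deg_ok m s -> deg_ok m s' -> deg_ok m t -> deg_ok m (phi s s' t).
Proof.
move=> ds ds'; elim/tree_size_ind: t => l IH /= /andP[so /allP ca].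
case: ifP => _ //; case: ifP => _ //=.
rewrite size_sort size_map so all_sort /=.
by apply/allP => _ /mapP[c hc ->]; apply: IH => //; exact: ca.
Qed.

Lemma phi_s : phi s s' s = s'.
Proof. have [l e] : exists l, s = Node l by case: (s) => l; exists l.
  by rewrite {2}e phiE -e eqxx. Qed.
Lemma phi_s' : phi s s' s' = s.
Proof.
case: (eqVneq s' s) => [e|h]; first by rewrite {2}e phi_s.
have [l e] : exists l, s' = Node l by case: (s') => l; exists l.
by rewrite {2}e phiE -e (negbTE h) eqxx.
Qed.

Lemma phi_invol t : canonical t -> phi s s' (phi s s' t) = t.
Proof.
elim/tree_size_ind: t => l IH ct.
case: (eqVneq (Node l) s) => h1.
  by rewrite h1 phi_s phi_s'.
case: (eqVneq (Node l) s') => h2.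
  by rewrite h2 phi_s' phi_s.
have [n1 n2] := phi_ne ct h1 h2.
rewrite phiE (negbTE h1) (negbTE h2).
move: n1 n2; set L := sort le_t _ => n1 n2.
rewrite phiE (negbTE n1) (negbTE n2).
move: ct => /andP[so /allP ca].
congr Node.
rewrite -[RHS](sorted_sort le_t_trans so).
apply/(perm_sortP le_t_total le_t_trans le_t_anti).
have -> : l = map (phi s s') (map (phi s s') l).
  rewrite -map_comp -{1}(map_id l); apply/eq_in_map => c hc /=; by rewrite IH //; exact: ca.
by apply: perm_map; rewrite /L perm_sort.
Qed.

Lemma cnt_phi t : canonical t -> count (pred1 s) (fringes (phi s s' t)) = count (pred1 s') (fringes t).
Proof.
elim/tree_size_ind: t => l IH ct.
case: (eqVneq (Node l) s) => h1.
  by rewrite h1 phi_s !cnt_same ?ns // eq_sym.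
case: (eqVneq (Node l) s') => h2.
  by rewrite h2 phi_s' !cnt_same ?ns // !eqxx.
have [n1 n2] := phi_ne ct h1 h2.
rewrite phiE (negbTE h1) (negbTE h2) !count_node /= (negbTE n1) (negbTE h2) /=.
rewrite (sumn_sort (fun c => count (pred1 s) (fringes c))) -map_comp.
move: ct => /andP[_ /allP ca].
congr sumn; apply/eq_in_map => c hc /=; exact: IH _ hc (ca c hc).
Qed.
End Phi.

Lemma sum_swap m n k En s s' (hE : enumerates En (inT m n)) (hs : inT m k s) (hs' : inT m k s') :
  \sum_(t <- En) count (pred1 s) (fringes t) = \sum_(t <- En) count (pred1 s') (fringes t).
Proof.
move: hs hs' => /and3P[cs ds /eqP ns] /and3P[cs' ds' /eqP ns'].
have nss : nverts s' = nverts s by rewrite ns ns'.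
case: hE => uE memE.
have inTphi t : inT m n t -> inT m n (phi s s' t).
  case/and3P => ct dt nt; apply/and3P; split; [exact: canon_phi | exact: deg_phi | by rewrite nverts_phi].
have cE t : t \in En -> canonical t by rewrite memE => /and3P[].
have hperm : perm_eq (map (phi s s') En) En.
  apply: uniq_perm => //.
    rewrite map_inj_in_uniq // => a b ha hb e.
    by rewrite -(phi_invol nss (cE _ ha)) e phi_invol // cE.
  move=> t; apply/mapP/idP => [[u hu ->]| ht]; first by rewrite memE inTphi // -memE.
  exists (phi s s' t); first by rewrite memE inTphi // -memE.
  by rewrite phi_invol // cE.
rewrite -(perm_big _ hperm) big_map; apply: eq_big_seq => t ht; rewrite cnt_phi // cE //.
Qed.

Lemma sum_eq_count x (E : seq tree) : \sum_(u <- E) (x == u) = count (pred1 x) E.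
Proof. by elim: E => [|y E IH]; rewrite ?big_nil ?big_cons //= IH eq_sym. Qed.

Lemma count_split (E : seq tree) (a : pred tree) l : uniq E ->
  (forall x, x \in l -> a x = (x \in E)) -> count a l = \sum_(u <- E) count (pred1 u) l.
Proof.
move=> uE; elim: l => [|x l IH] hl /=; first by rewrite big1.
rewrite big_split /= IH; last by move=> y hy; apply: hl; rewrite inE hy orbT.
by rewrite hl ?mem_head // -count_uniq_mem // sum_eq_count.
Qed.

Lemma sum_const_seq (E : seq tree) c : \sum_(u <- E) c = size E * c.
Proof. by elim: E => [|x E IH]; rewrite ?big_nil ?big_cons ?IH ?mulSn. Qed.

Definition chain (s : tree) j := iter j (fun t => Node [:: t]) s.

Lemma chain_props m s j : (if m is Some m' then (1 <= m')%N else true) ->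
  canonical s -> deg_ok m s ->
  [/\ canonical (chain s j), deg_ok m (chain s j), nverts (chain s j) = j + nverts s
    & s \in fringes (chain s j)].
Proof.
move=> hm cs ds; elim: j => [|j [c d n f]] /=; first by split => //; exact: fringes_self.
split => /=.
- by rewrite c.
- rewrite d; move: hm; clear; case: m => //= m' h; rewrite andbT; exact: h.
- rewrite n; lia.
- by rewrite inE cats0 f orbT.
Qed.

Import GRing.Theory Num.Theory.
Local Open Scope ring_scope.

Lemma probE (E : seq tree) n A : (forall t, t \in E -> nverts t = n) ->
  prob_sub E A = (1 / (size E)%:R / n%:R) * (\sum_(t <- E) count A (fringes t))%:R.
Proof.
move=> hE; rewrite /prob_sub natr_sum big_distrr; apply: eq_big_seq => t ht /=.
by rewrite hE // mulrA mulrAC.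
Qed.

Theorem lemma25 (m : option nat) (hm : if m is Some m' then (2 <= m')%N else true)
  (n k : nat) (hk1 : (1 <= k)%N) (hkn : (k <= n)%N)
  (En Ek : seq tree) (hEn : enumerates En (inT m n)) (hEk : enumerates Ek (inT m k))
  (s : tree) (hs : inT m k s) :
  prob_sub En (pred1 s) / prob_sub En (fun u : tree => (nverts u == k)%N) = 1 / (size Ek)%:R.
Proof.
have hnE t : t \in En -> nverts t = n by case: hEn => _ ->; case/and3P => _ _ /eqP.
rewrite !(probE _ hnE).
set c := (\sum_(t <- En) count (pred1 s) (fringes t))%N.
have Hden : (\sum_(t <- En) count (fun u => nverts u == k) (fringes t) = size Ek * c)%N.
  case: hEk => uEk memEk.
  rewrite (eq_big_seq (fun t => \sum_(u <- Ek) count (pred1 u) (fringes t)))%N; last first.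
    move=> t ht; apply: count_split => // x hx; rewrite memEk /inT.
    move: ht; case: hEn => _ -> /and3P[ct dt _].
    by rewrite (fringes_canon hx ct) (fringes_deg hx dt).
  rewrite exchange_big /= -sum_const_seq; apply: eq_big_seq => u hu.
  apply: (sum_swap hEn); last exact: hs.
  by rewrite -memEk.
move: hs => /and3P[cs ds /eqP ns].
have hm1 : Defs.le_bound m 1 by case: m hm {ds hEn hEk} => // m' h; exact: ltnW.
have [cc dc nc fc] := @chain_props m s (n - k) hm1 cs ds.
have chE : chain s (n - k) \in En.
  by case: hEn => _ ->; apply/and3P; split => //; rewrite nc ns subnK.
have c0 : (c != 0)%N.
  rewrite /c (bigD1_seq _ chE); last by case: hEn.
  rewrite /= -lt0n; apply: leq_trans (leq_addr _ _); rewrite -has_count.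
  by apply/hasP; exists s => //=.
have E0 : (size En != 0)%N by case: (En) chE.
have Ek0 : (size Ek != 0)%N.
  case: hEk => _ h; have : s \in Ek by rewrite h /inT cs ds ns eqxx.
  by case: (Ek).
have n0 : (n != 0)%N by rewrite -lt0n; exact: leq_trans hk1 hkn.
rewrite Hden natrM.
have cR : (c%:R : rat) != 0 by rewrite pnatr_eq0.
have ER : ((size En)%:R : rat) != 0 by rewrite pnatr_eq0.
have EkR : ((size Ek)%:R : rat) != 0 by rewrite pnatr_eq0.
have nR : (n%:R : rat) != 0 by rewrite pnatr_eq0.
field.
by rewrite EkR nR ER cR.
Qed.
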